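(* In a combinatorial auction with a finite set $M$ of heterogeneous items and $n$ bidders whose valuations are additive, there exists a randomized mechanism that is universally obviously strategy-proof and gives a $4$-approximation to the optimal social welfare.
   Context: A valuation $v_i:2^M\to\mathbb{R}_{\ge 0}$ is additive if there are numbers $v_{ij}\ge 0$ ($j\in M$) with $v_i(A)=\sum_{j\in A}v_{ij}$ for all $A\subseteq M$. Each bidder's valuation is private and the domain $V_i$ of possible valuations (here: all additive valuations) is publicly known; utilities are quasi-linear (value of the received bundle minus payment). A feasible allocation assigns disjoint bundles to the bidders. A deterministic mechanism is a rooted tree: each internal node is assigned to one bidder, who at that node sends one of the messages labeling the outgoing edges; each leaf is labeled with a feasible allocation and a payment for each bidder. A behavior $B_i$ of bidder $i$ specifies a message at every node assigned to $i$; a behavior profile $B=(B_1,\dots,B_n)$ determines a root-to-leaf path $\mathrm{Path}(B)$, and $f_i(B),p_i(B)$ denote bidder $i$'s bundle and payment at its leaf. A strategy $\mathcal S_i$ maps each $v_i\in V_i$ to a behavior. $\mathcal S_i$ is obviously dominant if for every $v_i\in V_i$, every node $u$ assigned to $i$, every behaviors $B_{-i}$ of the others and every profile $B'$ such that $u\in\mathrm{Path}(\mathcal S_i(v_i),B_{-i})\cap\mathrm{Path}(B')$ and $B'_i$ sends at $u$ a message different from that of $\mathcal S_i(v_i)$, we have $v_i(f_i(\mathcal S_i(v_i),B_{-i}))-p_i(\mathcal S_i(v_i),B_{-i})\ge v_i(f_i(B'))-p_i(B')$. A deterministic mechanism with strategies is obviously strategy-proof (OSP) if all its strategies are obviously dominant.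 A randomized mechanism is a probability distribution over deterministic mechanisms, each equipped with strategies; it is universally OSP if every deterministic mechanism in its support is OSP. For a valuation profile $v$, its welfare $\mathbb{E}[W(v)]$ is the expected (over the random draw) total value of the allocation reached when all bidders follow their strategies; it gives an $\alpha$-approximation if $\mathrm{OPT}(v)\le\alpha\,\mathbb{E}[W(v)]$ for every profile $v$, where $\mathrm{OPT}(v)$ is the maximum of $\sum_i v_i(T_i)$ over feasible allocations $(T_1,\dots,T_n)$. *)

(* Defs.v *)
From HB Require Import structures.
From mathcomp Require Import all_boot all_order all_algebra.
From mathcomp Require Import all_classical all_reals all_analysis.
Set Implicit Arguments. Unset Strict Implicit. Unset Printing Implicit Defensive.
Import Order.TTheory GRing.Theory Num.Theory.
Local Open Scope ring_scope.

Section Mechanisms.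
Variables (R : realType) (n : nat) (M : finType) (Msg : Type).

Definition feasible (T : {ffun 'I_n -> {set M}}) : bool :=
  [forall i : 'I_n, forall j : 'I_n, (i != j) ==> [disjoint T i & T j]].

(* An internal node is assigned to a bidder, has the set
   [ok] of messages labelling its outgoing edges, and a child for each
   message; a leaf is labelled with an allocation and payments.
   Nodes are identified with their histories (sequences of messages from
   the root). *)
Inductive mtree : Type :=
| Leaf of {ffun 'I_n -> {set M}} & ('I_n -> R)
| Node of 'I_n & pred Msg & (Msg -> mtree).

Fixpoint wf_tree (t : mtree) : Prop :=
  match t with
  | Leaf a _ => feasible a
  | Node _ ok next => forall m, ok m -> wf_tree (next m)
  end.

Fixpoint node_at (t : mtree) (h : seq Msg) : option mtree :=
  match h with
  | [::] => Some t
  | m :: h' =>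
      match t with
      | Leaf _ _ => None
      | Node _ ok next => if ok m then node_at (next m) h' else None
      end
  end.

Definition behavior := seq Msg -> Msg.
Definition profile := 'I_n -> behavior.

Definition valid_beh (t : mtree) (i : 'I_n) (b : behavior) : Prop :=
  forall h ok next, node_at t h = Some (Node i ok next) -> ok (b h).

Definition valid_profile (t : mtree) (B : profile) : Prop :=
  forall i, valid_beh t i (B i).

(* outcome (allocation, payments) at the leaf reached by profile B,
   starting at subtree t located at history h *)
Fixpoint outcome (t : mtree) (B : profile) (h : seq Msg)
  : {ffun 'I_n -> {set M}} * ('I_n -> R) :=
  match t with
  | Leaf a p => (a, p)
  | Node i _ next => outcome (next (B i h)) B (rcons h (B i h))
  end.

Fixpoint onpath (t : mtree) (B : profile) (h : seq Msg) (u : seq Msg) : Prop :=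
  match t with
  | Leaf _ _ => False
  | Node i _ next => u = h \/ onpath (next (B i h)) B (rcons h (B i h)) u
  end.

Definition addval (v : M -> R) (A : {set M}) : R := \sum_(j in A) v j.

Definition utility (v : M -> R) (o : {ffun 'I_n -> {set M}} * ('I_n -> R))
  (i : 'I_n) : R := addval v (o.1 i) - o.2 i.

Definition additive_dom (v : M -> R) : Prop := forall j, 0 <= v j.

Definition strategies := 'I_n -> (M -> R) -> behavior.

Definition upd (B : profile) (i : 'I_n) (b : behavior) : profile :=
  fun j => if j == i then b else B j.

Definition OSP (t : mtree) (S : strategies) : Prop :=
  (forall i v, additive_dom v -> valid_beh t i (S i v)) /\
  forall (i : 'I_n) (v : M -> R), additive_dom v ->
  forall (u : seq Msg) ok next, node_at t u = Some (Node i ok next) ->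
  forall (B B' : profile), valid_profile t B -> valid_profile t B' ->
    onpath t (upd B i (S i v)) [::] u -> onpath t B' [::] u ->
    B' i u <> S i v u ->
    utility v (outcome t B' [::]) i <= utility v (outcome t (upd B i (S i v)) [::]) i.

Definition welfare (t : mtree) (S : strategies) (v : 'I_n -> M -> R) : R :=
  let o := outcome t (fun i => S i (v i)) [::] in
  \sum_(i < n) addval (v i) (o.1 i).

End Mechanisms.

Definition OPT (R : realType) (n : nat) (M : finType) (v : 'I_n -> M -> R) : R :=
  \big[Num.max/0]_(T : {ffun 'I_n -> {set M}} | feasible T)
     \sum_(i < n) addval (v i) (T i).

(* Main.v *)
Require Import Defs.
From HB Require Import structures.
From mathcomp Require Import all_boot all_order all_algebra.
From mathcomp Require Import all_classical all_reals all_analysis.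
From mathcomp Require Import measurable_realfun.
From mathcomp Require Import zify ring lra.
Import Order.TTheory GRing.Theory Num.Theory.
Set Implicit Arguments. Unset Strict Implicit. Unset Printing Implicit Defensive.
Local Open Scope ring_scope.
Section Mech.
Variables (R : realType) (n : nat) (M : finType).
Notation Msg := (M -> R).
Implicit Types (w : {ffun 'I_n -> bool}) (r : 'I_n -> M -> R).

Definition mprice w r j : R := \big[Num.max/0]_(a | ~~ w a) r a j.
Definition gtb w r j b := w b && (mprice w r j < r b j).
Definition eqb w r j b := w b && (r b j == mprice w r j).
Definition wins w r (i : 'I_n) j :=
  (gtb w r j i && [forall b : 'I_n, (b < i)%N ==> ~~ gtb w r j b]) ||
  [&& [forall b, ~~ gtb w r j b], eqb w r j i &
      [forall b : 'I_n, (b < i)%N ==> ~~ eqb w r j b]].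
Definition alloc w r : {ffun 'I_n -> {set M}} := [ffun i => [set j | wins w r i j]].
Definition pay w r (i : 'I_n) : R := \sum_(j in alloc w r i) mprice w r j.

Lemma wins_uniq {w r j i i'} : wins w r i j -> wins w r i' j -> i = i'.
Proof.
case/orP => [/andP[gi mi] | /and3P[ng ei mi]];
  case/orP => [/andP[gi' mi'] | /and3P[ng' ei' mi']].
- apply/val_inj; case: (ltngtP i i') => // h.
    by have := forallP mi' i; rewrite h gi.
  by have := forallP mi i'; rewrite h gi'.
- by have := forallP ng' i; rewrite gi.
- by have := forallP ng i'; rewrite gi'.
- apply/val_inj; case: (ltngtP i i') => // h.
    by have := forallP mi' i; rewrite h ei.
  by have := forallP mi i'; rewrite h ei'.
Qed.

Lemma feasible_alloc w r : feasible (alloc w r).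
Proof.
apply/forallP => i; apply/forallP => i'; apply/implyP => ne.
rewrite -setI_eq0; apply/eqP/setP => j; rewrite !inE !ffunE !inE.
apply/negbTE/negP => /andP[a b]; move: ne; by rewrite (wins_uniq a b : i = i') eqxx.
Qed.

Lemma wins_B w r i j : wins w r i j -> w i.
Proof. by case/orP => [/andP[/andP[]] | /and3P[_ /andP[]]]. Qed.

Lemma wins_ge w r i j : wins w r i j -> mprice w r j <= r i j.
Proof.
case/orP => [/andP[/andP[_ /ltW]] // | /and3P[_ /andP[_ /eqP ->]] _].
by [].
Qed.

Definition ordl w : seq 'I_n :=
  [seq i <- ord_enum n | ~~ w i] ++ [seq i <- ord_enum n | w i].
Definition rep w (H : seq Msg) : 'I_n -> M -> R :=
  fun i => nth (fun _ => 0) H (index i (ordl w)).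
Definition Fl w (H : seq Msg) := (alloc w (rep w H), pay w (rep w H)).

Fixpoint build w (l : seq 'I_n) (h : seq Msg) : mtree R n M Msg :=
  match l with
  | [::] => Leaf Msg (Fl w h).1 (Fl w h).2
  | i :: l' => Node i (fun _ => true) (fun x => build w l' (rcons h x))
  end.

Fixpoint run (l : seq 'I_n) (h : seq Msg) (B : profile n Msg) : seq Msg :=
  match l with
  | [::] => h
  | i :: l' => run l' (rcons h (B i h)) B
  end.

Lemma wf_build w l h : wf_tree (build w l h).
Proof.
elim: l h => [|i l IH] h /=; first exact: feasible_alloc.
by move=> m _; apply: IH.
Qed.

Lemma outcome_build w l h B : outcome (build w l h) B h = Fl w (run l h B).
Proof. by elim: l h => [|i l IH] h //=. Qed.

Lemma node_at_build w l h u i ok next :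
  node_at (build w l h) u = Some (Node i ok next) ->
  [/\ (size u < size l)%N, nth i l (size u) = i & forall m, ok m].
Proof.
elim: u l h => [|m u IH] [|i' l] h //=.
- by case=> <- <- _.
- by move=> /IH [? ? ?].
Qed.

Lemma run_prefix l h B : exists s, run l h B = h ++ s.
Proof.
elim: l h => [|i l IH] h /=; first by exists [::]; rewrite cats0.
have [s ->] := IH (rcons h (B i h)).
by exists (B i h :: s); rewrite -cats1 -catA.
Qed.

Lemma size_run l h B : size (run l h B) = (size h + size l)%N.
Proof.
elim: l h => [|i l IH] h /=; first by rewrite addn0.
by rewrite IH size_rcons addSnnS.
Qed.

Lemma take_run l h B : take (size h) (run l h B) = h.
Proof. by have [s ->] := run_prefix l h B; rewrite take_size_cat. Qed.

Lemma nth_run l h B k (i0 : 'I_n) (x0 : Msg) : (size h <= k < size h + size l)%N ->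
  nth x0 (run l h B) k = B (nth i0 l (k - size h)) (take k (run l h B)).
Proof.
elim: l h => [|i l IH] h /=; first by rewrite addn0; lia.
case/andP => h1 h2.
case: (ltngtP (size h) k) h1 => // [lt|eq] _.
- rewrite IH; last by rewrite size_rcons; lia.
  rewrite size_rcons.
  have -> : (k - size h = (k - (size h).+1).+1)%N by lia.
  by [].
- rewrite -eq subnn /=.
  have [s ->] := run_prefix l (rcons h (B i h)) B.
  rewrite -cats1 -catA take_size_cat // nth_cat ltnn subnn //.
Qed.

Lemma onpath_build w l h B u : onpath (build w l h) B h u ->
  [/\ (size h <= size u)%N, (size u < size h + size l)%N & u = take (size u) (run l h B)].
Proof.
elim: l h => [|i l IH] h //=.
case=> [->|].
- split; [by [] | by lia | ].
  have [s ->] := run_prefix l (rcons h (B i h)) B.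
  by rewrite -cats1 -catA take_size_cat.
- move=> /IH [h1 h2 h3]; split => //.
  + by apply: leq_trans h1; rewrite size_rcons.
  + by rewrite size_rcons addSnnS in h2.
Qed.

End Mech.
Section Mech2.
Variables (R : realType) (n : nat) (M : finType).
Notation Msg := (M -> R).
Implicit Types (w : {ffun 'I_n -> bool}) (r : 'I_n -> M -> R).

Lemma ordl_uniq w : uniq (ordl w).
Proof.
rewrite cat_uniq !filter_uniq ?ord_enum_uniq //= andbT; apply/hasPn => x; rewrite !mem_filter => /andP[wx _].
by rewrite wx.
Qed.

Lemma mem_ordl w i : i \in ordl w.
Proof. by rewrite mem_cat !mem_filter mem_ord_enum; case: (w i). Qed.

Lemma ordl_before w i b : w i -> (~~ w b || (b < i)%N) ->
  (index b (ordl w) < index i (ordl w))%N.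
Proof.
move=> wi hb; rewrite /ordl !index_cat.
have -> : (i \in [seq i0 <- ord_enum n | ~~ w i0]) = false by rewrite mem_filter wi.
case wb: (w b).
- have -> : (b \in [seq i0 <- ord_enum n | ~~ w i0]) = false by rewrite mem_filter wb.
  move: hb; rewrite wb /= => bi; rewrite ltn_add2l.
  set s2 := [seq i0 <- ord_enum n | w i0].
  have ss : sorted (relpre val ltn) s2.
    apply: sorted_filter; first by move=> ? ? ? /=; apply: ltn_trans.
    by rewrite -sorted_map val_ord_enum iota_ltn_sorted.
  have bs : b \in s2 by rewrite mem_filter wb mem_ord_enum.
  have is2 : i \in s2 by rewrite mem_filter wi mem_ord_enum.
  rewrite ltnNge leq_eqVlt; apply/negP => /orP[/eqP e|lt].
    have : nth b s2 (index i s2) = nth b s2 (index b s2) by rewrite e.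
    rewrite !nth_index // => eib; move: bi; rewrite eib ltnn //.
  have tr : transitive (relpre (val : 'I_n -> nat) ltn).
    by move=> ? ? ? /=; apply: ltn_trans.
  have /= ib := sorted_ltn_index tr ss i b is2 bs lt.
  by move: (ltn_trans ib bi); rewrite ltnn.
- have -> : (b \in [seq i0 <- ord_enum n | ~~ w i0]) = true by rewrite mem_filter wb mem_ord_enum.
  apply: leq_trans (leq_addr _ _).
  by rewrite index_mem mem_filter wb mem_ord_enum.
Qed.

Lemma alloc_nonB w r i : ~~ w i -> alloc w r i = @finset.set0 M.
Proof.
move=> wi; apply/setP => j; rewrite ffunE !inE.
by apply/negP => /wins_B; rewrite (negbTE wi).
Qed.

End Mech2.
Section M3.
Variables (R : realType) (n : nat) (M : finType).
Implicit Types (w : {ffun 'I_n -> bool}) (r : 'I_n -> M -> R).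
Lemma utilityE w r (v : M -> R) i :
  utility v (alloc w r, pay w r) i =
  \sum_j (if wins w r i j then v j - mprice w r j else 0).
Proof.
rewrite /utility /addval /pay /=.
rewrite -sumrB big_mkcond.
apply: eq_bigr => j _; rewrite ffunE inE; by case: ifP.
Qed.

End M3.
Section M4.
Variables (R : realType) (n : nat) (M : finType).
Notation Msg := (M -> R).
Implicit Types (w : {ffun 'I_n -> bool}) (r : 'I_n -> M -> R).
Lemma util_cmp w (H H' : seq Msg) (k : nat) (i : 'I_n) (v : M -> R) :
  (k < size (ordl w))%N -> nth i (ordl w) k = i -> take k H = take k H' ->
  nth (fun _ => 0) H k = v ->
  utility v (Fl w H') i <= utility v (Fl w H) i.
Proof.
move=> ks ni tk nv.
have ki : index i (ordl w) = k by rewrite -{1}ni index_uniq // ordl_uniq.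
have rv : rep w H i = v by rewrite /rep ki.
have agree : forall b, (index b (ordl w) < k)%N -> rep w H b = rep w H' b.
  by move=> b hb; rewrite /rep -(nth_take _ hb) tk (nth_take _ hb).
case wi: (w i); last first.
  rewrite /Fl !utilityE !big1 // => j _; rewrite ifN //; apply/negP => /wins_B; by rewrite wi.
rewrite /Fl !utilityE; apply: ler_sum => j _.
set r := rep w H; set r' := rep w H'.
have mp : mprice w r' j = mprice w r j.
  apply: eq_bigr => a wa; rewrite /r /r' agree //.
  by rewrite -ki; apply: ordl_before => //; rewrite wa.
have gt_ag : forall b : 'I_n, (b < i)%N -> gtb w r' j b = gtb w r j b.
  move=> b bi; rewrite /gtb mp; case wb: (w b) => //=.
  by rewrite /r /r' agree // -ki; apply: ordl_before => //; rewrite bi orbT.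
have riv : r i j = v j by rewrite /r rv.
rewrite mp.
case W': (wins w r' i j); last first.
  case W: (wins w r i j) => //.
  by rewrite subr_ge0 -riv; apply: wins_ge W.
case: (leP (v j) (mprice w r j)) => hv.
  case: (wins w r i j) => //.
  by rewrite subr_le0.
have -> : wins w r i j.
  apply/orP; left; apply/andP; split; first by rewrite /gtb wi riv hv.
  apply/forallP => b; apply/implyP => bi; rewrite -gt_ag //.
  case/orP: W' => [/andP[_ /forallP /(_ b)] | /and3P[/forallP /(_ b) ? _ _]] //.
  by rewrite bi.
by [].
Qed.

End M4.
Section M5.
Variables (R : realType) (n : nat) (M : finType).
Notation Msg := (M -> R).
Implicit Types (w : {ffun 'I_n -> bool}) (r : 'I_n -> M -> R).

Definition Sstrat : strategies R n M Msg := fun _ v _ => v.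

Lemma osp_build w : OSP (build w (ordl w) [::]) Sstrat.
Proof.
split.
- by move=> i v _ h ok next /node_at_build [_ _ ->].
- move=> i v _ u ok next /node_at_build [ks ni _] B B' _ _ p1 p2 _.
  have [_ _ e1] := onpath_build p1.
  have [_ _ e2] := onpath_build p2.
  rewrite !outcome_build.
  apply: (util_cmp (k := size u)) => //.
  + by rewrite -e1 -e2.
  + rewrite (@nth_run _ _ _ _ _ _ _ i); last by rewrite /= add0n ks.
    by rewrite subn0 ni /upd eqxx.
Qed.

Lemma welfare_build w (v : 'I_n -> M -> R) :
  welfare (build w (ordl w) [::]) Sstrat v = \sum_i addval (v i) (alloc w v i).
Proof.
rewrite /welfare outcome_build /Fl /=.
have -> : rep w (run (ordl w) [::] (fun i => Sstrat i (v i))) = v.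
  apply/funext => b; rewrite /rep (@nth_run _ _ _ _ _ _ _ b).
    by rewrite subn0 nth_index // mem_ordl.
  by rewrite /= add0n index_mem mem_ordl.
by [].
Qed.

End M5.
Section M6.
Variables (R : realType) (n : nat) (M : finType).
Implicit Types (w : {ffun 'I_n -> bool}) (v : 'I_n -> M -> R).

Definition gw w v j : R := \sum_i (if wins w v i j then v i j else 0).

Lemma gw_ge0 w v j : (forall i j, 0 <= v i j) -> 0 <= gw w v j.
Proof. by move=> v0; apply: sumr_ge0 => i _; case: ifP. Qed.

Lemma gw_ge w v j b : (forall i j, 0 <= v i j) -> wins w v b j -> v b j <= gw w v j.
Proof.
move=> v0 wb; rewrite /gw (bigD1 b) //= wb lerDl.
by apply: sumr_ge0 => i _; case: ifP.
Qed.

Lemma welfare_items w v :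
  \sum_i addval (v i) (alloc w v i) = \sum_j gw w v j.
Proof.
rewrite /addval /gw; under eq_bigr do rewrite big_mkcond.
rewrite exchange_big; apply: eq_bigr => j _; apply: eq_bigr => i _.
by rewrite ffunE inE.
Qed.

Lemma key w v j t : (forall i j, 0 <= v i j) -> (forall i, v i j <= v t j) -> w t ->
  (forall b, w b -> b != t -> v b j <= mprice w v j) -> v t j <= gw w v j.
Proof.
move=> v0 hmax wt hb.
have mle : mprice w v j <= v t j.
  by apply/bigmax_leP; split => // a _.
case: (boolP [exists b, gtb w v j b]) => [/existsP[b gb] | /existsPn ng].
- have onlyt : forall b, gtb w v j b -> b = t.
    move=> b' /andP[wb' lt']; apply/eqP; apply: contraLR lt' => ne.
    by rewrite -leNgt; apply: hb.
  have wint : wins w v t j.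
    apply/orP; left; apply/andP; split; first by rewrite -(onlyt _ gb).
    apply/forallP => b'; apply/implyP => lt'; apply/negP => /onlyt e.
    by move: lt'; rewrite e ltnn.
  exact: gw_ge.
- have et : v t j = mprice w v j.
    apply/eqP; rewrite eq_le mle andbT.
    by have := ng t; rewrite /gtb wt /= -leNgt.
  have eqt : eqb w v j t by rewrite /eqb wt et eqxx.
  case: (arg_minnP (fun b : 'I_n => val b) eqt) => b0 eb0 minb0.
  have winb : wins w v b0 j.
    apply/orP; right; apply/and3P; split => //.
      by apply/forallP => b'; apply: ng.
    apply/forallP => b'; apply/implyP => lt'; apply/negP => /minb0.
    by rewrite leqNgt lt'.
  apply: le_trans (gw_ge v0 winb).
  by move: eb0 => /andP[_ /eqP ->]; rewrite et.
Qed.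

Definition tog (a : 'I_n) w : {ffun 'I_n -> bool} :=
  [ffun b => if b == a then ~~ w b else w b].

Lemma togK a : cancel (tog a) (tog a).
Proof.
move=> w; apply/ffunP => b; rewrite !ffunE.
by case: eqP => // _; rewrite negbK.
Qed.

Lemma sum_tog (F : {ffun 'I_n -> bool} -> R) a :
  \sum_w F (tog a w) = \sum_w F w.
Proof. by rewrite [RHS](reindex_inj (can_inj (togK a))). Qed.

Lemma count4 v j t : (forall i j, 0 <= v i j) -> (forall i, v i j <= v t j) ->
  #|{ffun 'I_n -> bool}|%:R * v t j <= 4 * \sum_w gw w v j.
Proof.
move=> v0 ht.
pose key2 i := if i == t then -1 else v i j.
pose s := [arg max_(i > t) key2 i]%O.
have hs : forall b, b != t -> s != t /\ v b j <= v s j.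
  move=> b bt; rewrite /s; case: arg_maxP => // s0 _ hm.
  have := hm b isT; rewrite /key2 (negbTE bt).
  case: eqP => [_ | _ //].
  by move=> h; move: (le_lt_trans (v0 b j) (le_lt_trans h (ltrN10 R))); rewrite ltxx.
have pt : forall w, v t j <=
    gw w v j + gw (tog t w) v j + gw (tog s w) v j + gw (tog s (tog t w)) v j.
  move=> w.
  have g0 := fun w => gw_ge0 w j v0.
  have hyp : forall w', w' t -> (s == t) || ~~ w' s ->
      forall b, w' b -> b != t -> v b j <= mprice w' v j.
    move=> w' _ hs' b _ bt; have [st vb] := hs b bt.
    move: hs'; rewrite (negbTE st) /= => ws.
    apply: (le_trans vb); exact: le_bigmax_cond.
  have tt' : tog t w t = ~~ w t by rewrite ffunE eqxx.
  have n1 := g0 w; have n2 := g0 (tog t w); have n3 := g0 (tog s w).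
  have n4 := g0 (tog s (tog t w)).
  case: (eqVneq s t) => [est | nst].
  - case wt: (w t).
    + have := key v0 ht wt (hyp w wt (introT orP (or_introl (introT eqP est)))).
      lra.
    + have wt' : tog t w t by rewrite tt' wt.
      have := key v0 ht wt' (hyp _ wt' (introT orP (or_introl (introT eqP est)))).
      lra.
  - have ts : tog t w s = w s by rewrite ffunE (negbTE nst).
    have st_ : tog s w t = w t by rewrite ffunE eq_sym (negbTE nst).
    have ss : tog s w s = ~~ w s by rewrite ffunE eqxx.
    have sst : tog s (tog t w) t = ~~ w t by rewrite ffunE eq_sym (negbTE nst) tt'.
    have sss : tog s (tog t w) s = ~~ w s by rewrite ffunE eqxx ts.
    case wt: (w t); case ws: (w s).
    + have h1 : tog s w t by rewrite st_ wt.
      have h2 : (s == t) || ~~ tog s w s by rewrite ss ws orbT.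
      have := key v0 ht h1 (hyp _ h1 h2); lra.
    + have h2 : (s == t) || ~~ w s by rewrite ws orbT.
      have := key v0 ht wt (hyp _ wt h2); lra.
    + have h1 : tog s (tog t w) t by rewrite sst wt.
      have h2 : (s == t) || ~~ tog s (tog t w) s by rewrite sss ws orbT.
      have := key v0 ht h1 (hyp _ h1 h2); lra.
    + have h1 : tog t w t by rewrite tt' wt.
      have h2 : (s == t) || ~~ tog t w s by rewrite ts ws orbT.
      have := key v0 ht h1 (hyp _ h1 h2); lra.
have : \sum_(w : {ffun 'I_n -> bool}) v t j <= \sum_w (gw w v j + gw (tog t w) v j + gw (tog s w) v j + gw (tog s (tog t w)) v j).
  by apply: ler_sum => w _; apply: pt.
rewrite sumr_const !big_split /=.
rewrite (sum_tog (fun w => gw w v j) t) (sum_tog (fun w => gw w v j) s).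
rewrite (sum_tog (fun w => gw (tog s w) v j) t) (sum_tog (fun w => gw w v j) s).
move=> h; rewrite mulr_natl; apply: (le_trans h); lra.
Qed.

End M6.
Section M7.
Variables (R : realType) (n : nat) (M : finType).
Implicit Types (w : {ffun 'I_n -> bool}) (v : 'I_n -> M -> R).

Definition vmax v j : R := \big[Num.max/0]_i v i j.

Lemma vmax_ge0 v j : (forall i j, 0 <= v i j) -> 0 <= vmax v j.
Proof.
by move=> v0; apply: (big_ind (fun x : R => 0 <= x)) => // x y x0 _; rewrite le_max x0.
Qed.

Lemma OPT_le v : (forall i j, 0 <= v i j) -> OPT v <= \sum_j vmax v j.
Proof.
move=> v0; apply/bigmax_leP; split; first by apply: sumr_ge0 => j _; exact: vmax_ge0.
move=> T feas; rewrite /addval; under eq_bigr do rewrite big_mkcond.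
rewrite exchange_big; apply: ler_sum => j _.
case: (boolP [exists i, j \in T i]) => [/existsP[i ji] | /existsPn nj].
- rewrite (bigD1 i) //= ji big1 ?addr0; first exact: le_bigmax.
  move=> i' ne; have := forallP (forallP feas i) i'.
  rewrite eq_sym ne /= => d.
  by rewrite (disjointFr d ji).
- by rewrite big1 ?vmax_ge0 // => i _; rewrite (negbTE (nj i)).
Qed.

Lemma count_vmax v j : (forall i j, 0 <= v i j) ->
  #|{ffun 'I_n -> bool}|%:R * vmax v j <= 4 * \sum_w gw w v j.
Proof.
move=> v0.
case: (pickP (@predT 'I_n)) => [i0 _ | none].
- case: (@arg_maxP _ _ _ i0 predT (fun i => v i j)) => // t _ ht.
  apply: le_trans (count4 v0 (fun i => ht i isT)).
  apply: ler_wpM2l => //.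
  by apply/bigmax_leP; split => // i _; apply: ht.
- have : vmax v j <= 0 by apply/bigmax_leP; split => // i; by have := none i.
  move=> h; apply: (@le_trans _ _ 0).
    by rewrite mulr_ge0_le0.
  by rewrite mulr_ge0 // sumr_ge0 // => w _; apply: gw_ge0.
Qed.

End M7.

Section Unif.
Context (R : realType) (K : nat).
Lemma unif_r_ge0 : 0 <= ((K.+1)%:R : R)^-1. Proof. by rewrite invr_ge0. Qed.
Definition unif_r : {nonneg R} := NngNum unif_r_ge0.
Definition unifm := mscale unif_r (msum (fun k : nat => (@dirac _ nat k R)) K.+1).
HB.instance Definition _ := Measure.on unifm.

Lemma unifm_int (f : nat -> \bar R) : (forall x, 0 <= f x)%E ->
  (\int[unifm]_x f x = unif_r%:num%:E * \sum_(k < K.+1) f k)%E.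
Proof.
move=> f0.
rewrite ge0_integral_mscale //; congr (_ * _)%E.
rewrite ge0_integral_measure_sum //; apply: eq_bigr => k _.
by rewrite integral_dirac // diracE in_setT mul1e.
Qed.

Lemma unifm_setT : unifm setT = 1%E.
Proof.
rewrite /unifm /mscale /=.
have -> : msum (fun k : nat => (@dirac _ nat k R)) K.+1 [set: nat] = (K.+1%:R)%:E.
  rewrite /msum /=.
  transitivity (\sum_(k < K.+1) (1%:E : \bar R))%E.
    by apply: eq_bigr => k _; rewrite /dirac indicE in_setT.
  by rewrite sumEFin sumr_const card_ord.
by rewrite -EFinM mulVf.
Qed.

HB.instance Definition _ := Measure_isProbability.Build _ _ _ unifm unifm_setT.
End Unif.

Unset Implicit Arguments.

Theorem theorem4p1 (R : realType) (n : nat) (M : finType) :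
  exists (d : measure_display) (Omega : measurableType d)
         (P : probability Omega R) (Msg : Omega -> Type)
         (t : forall w : Omega, mtree R n M (Msg w))
         (S : forall w : Omega, strategies R n M (Msg w)),
    (forall w, wf_tree (t w) /\ OSP (t w) (S w)) /\
    (forall v : 'I_n -> M -> R, (forall i, additive_dom (v i)) ->
       measurable_fun setT (fun w => welfare (t w) (S w) v) /\
       ((OPT v)%:E <= 4%:E * \int[P]_w (welfare (t w) (S w) v)%:E)%E).
Proof.
pose K := #|{ffun 'I_n -> bool}|.-1.
pose dec (k : nat) : {ffun 'I_n -> bool} := nth [ffun=> false] (enum {ffun 'I_n -> bool}) k.
exists _, nat, (unifm R K), (fun _ => M -> R),
  (fun k => build (dec k) (ordl (dec k)) [::]), (fun k => @Sstrat R n M).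
split.
  by move=> k; split; [apply: wf_build | apply: osp_build].
move=> v hv.
have v0 : forall i j, 0 <= v i j by move=> i j; apply: hv.
split; first by [].
rewrite unifm_int; last first.
  move=> k; rewrite lee_fin welfare_build welfare_items.
  by apply: sumr_ge0 => j _; apply: gw_ge0.
rewrite sumEFin -!EFinM lee_fin /=.
under eq_bigr do rewrite welfare_build welfare_items.
have cardpos : K.+1 = #|{ffun 'I_n -> bool}|.
  rewrite prednK //; apply/card_gt0P; by exists [ffun=> false].
have e : \sum_(k < K.+1) \sum_j gw (dec k) v j = \sum_w \sum_j gw w v j.
  transitivity (\sum_(w <- enum {ffun 'I_n -> bool}) \sum_j gw w v j); last first.
    by rewrite big_enum.
  rewrite (big_nth [ffun=> false]) -cardE -cardpos big_mkord.
  by [].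
rewrite e exchange_big /=.
apply: le_trans (OPT_le v0) _.
rewrite mulrA mulr_sumr; apply: ler_sum => j _.
have cp : (0 : R) < K.+1%:R by rewrite ltr0n.
rewrite -mulrA mulrCA ler_pdivlMl // cardpos.
exact: count_vmax.
Qed.
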